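(* Let $T=\begin{pmatrix} A_1 & \cdots & A_N\\ B_1&\cdots&B_N\end{pmatrix}$ be a complex matrix partitioned into $2\times N$ blocks such that every block $A_k$ and $B_k$ has rank $1$, and let $p>0$. Then $\|T\|_p\le\|\mathcal C_p(T)\|_p$ if $p\ge 2$, and $\|T\|_p\ge\|\mathcal C_p(T)\|_p$ if $0<p\le 2$.
   Context: For a matrix $X$ and $r>0$, $\|X\|_r=(\operatorname{Tr}|X|^r)^{1/r}$ with $|X|=(X^*X)^{1/2}$ (a norm for $r\ge1$, a quasi-norm for $0<r<1$). In a $2\times N$ partitioned block matrix all blocks in a block row have the same number of rows and all blocks in a block column have the same number of columns. The norm compression is the $2\times N$ real matrix $\mathcal C_p(T)=\begin{pmatrix} \|A_1\|_p & \cdots & \|A_N\|_p\\ \|B_1\|_p&\cdots&\|B_N\|_p\end{pmatrix}$. *)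

(* Defs.v *)
From HB Require Import structures.
From mathcomp Require Import all_boot all_order all_algebra.
From mathcomp Require Import complex.
From mathcomp Require Import reals exp.
Set Implicit Arguments. Unset Strict Implicit. Unset Printing Implicit Defensive.
Import Order.TTheory GRing.Theory Num.Theory.
Local Open Scope ring_scope.

Definition adjmx (R : realType) (m n : nat) (X : 'M[R[i]]_(m, n)) : 'M[R[i]]_(n, m) :=
  (map_mx (@conjc R) X)^T.

(* The eigenvalues (with algebraic multiplicity) of a square complex matrix:
   the roots of its characteristic polynomial, which splits over R[i]. *)
Definition eigenvalues (R : realType) (n : nat) (M : 'M[R[i]]_n) : seq R[i] :=
  sval (closed_field_poly_normal (char_poly M)).

(* Tr |X|^r, where |X| = (X^* X)^{1/2}: the eigenvalues of the positive semidefinite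
   matrix X^* X are nonnegative reals lambda_i, those of |X|^r are lambda_i^{r/2}. *)
Definition trace_abs_pow (R : realType) (m n : nat) (r : R) (X : 'M[R[i]]_(m, n)) : R :=
  \sum_(z <- eigenvalues (adjmx X *m X)) (complex.Re z) `^ (r / 2).

Definition schatten (R : realType) (m n : nat) (r : R) (X : 'M[R[i]]_(m, n)) : R :=
  (trace_abs_pow r X) `^ (r^-1).

Definition block2N (R : realType) (m1 m2 N : nat) (n : 'I_N -> nat)
  (A : forall k : 'I_N, 'M[R[i]]_(m1, n k)) (B : forall k : 'I_N, 'M[R[i]]_(m2, n k))
  : 'M[R[i]]_(m1 + m2, \sum_(k < N) n k) :=
  col_mx (\mxrow_k A k) (\mxrow_k B k).

Definition norm_compression (R : realType) (p : R) (m1 m2 N : nat) (n : 'I_N -> nat)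
  (A : forall k : 'I_N, 'M[R[i]]_(m1, n k)) (B : forall k : 'I_N, 'M[R[i]]_(m2, n k))
  : 'M[R[i]]_(2, N) :=
  \matrix_(i < 2, k < N) ((if i == 0 :> nat then schatten p (A k) else schatten p (B k)) +i* 0)%C.

(* Main.v *)
Require Import Defs.
From HB Require Import structures.
From mathcomp Require Import all_boot all_order all_algebra.
From mathcomp Require Import complex.
From mathcomp Require Import reals exp.
From mathcomp Require Import spectral sesquilinear.
From mathcomp Require Import convex hoelder interval_inference boolp classical_sets set_interval.
From mathcomp Require Import ring lra.
Set Implicit Arguments. Unset Strict Implicit. Unset Printing Implicit Defensive.
Import Order.TTheory GRing.Theory Num.Theory.
Local Open Scope ring_scope.
Local Open Scope complex_scope.

Section Scalar.
Variable R : realType.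
Implicit Types (q t a b mu : R).

Lemma powR_conv (q w a b : R) : 1 <= q -> 0 <= w -> w <= 1 -> 0 <= a -> 0 <= b ->
  (w * a + (1 - w) * b) `^ q <= w * a `^ q + (1 - w) * b `^ q.
Proof.
move=> q1 w0 w1 a0 b0.
have := @convex_powR R q q1 (Itv01 w0 w1) a b.
rewrite !in_setE /= !in_itv /= !andbT => /(_ a0 b0).
by rewrite !convRE.
Qed.

Lemma pt_le {q t mu : R} : 1 <= q -> 0 <= t -> t <= mu -> 0 < mu ->
  t `^ q <= (t / mu) * mu `^ q.
Proof.
move=> q1 t0 tm m0.
have -> : t = (t / mu) * mu by rewrite divfK // gt_eqF.
rewrite powRM ?divr_ge0 ?(ltW m0) // mulfK ?gt_eqF //.
rewrite ler_wpM2r ?powR_ge0 //.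
have [->|tn0] := eqVneq t 0; first by rewrite mul0r powR0 // gt_eqF // (lt_le_trans _ q1).
apply: ge1r_powR => //; apply/andP; split.
  by rewrite divr_gt0 // lt_neqAle eq_sym tn0.
by rewrite ler_pdivrMr // mul1r.
Qed.

Lemma pt_ge {q t mu : R} : 0 < q -> q <= 1 -> 0 <= t -> t <= mu -> 0 < mu ->
  (t / mu) * mu `^ q <= t `^ q.
Proof.
move=> q0 q1 t0 tm m0.
have -> : t = (t / mu) * mu by rewrite divfK // gt_eqF.
rewrite powRM ?divr_ge0 ?(ltW m0) // mulfK ?gt_eqF //.
rewrite ler_wpM2r ?powR_ge0 //.
have [->|tn0] := eqVneq t 0; first by rewrite mul0r.
apply: ger1_powR => //; apply/andP; split.
  by rewrite divr_gt0 // lt_neqAle eq_sym tn0.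
by rewrite ler_pdivrMr // mul1r.
Qed.

Lemma chord_le {q a t b : R} : 1 <= q -> 0 <= a -> a <= t -> t <= b -> a < b ->
  t `^ q <= a `^ q + (b `^ q - a `^ q) / (b - a) * (t - a).
Proof.
move=> q1 a0 hat tb ab.
have ba : b - a != 0 by rewrite subr_eq0 gt_eqF.
pose w := (b - t) / (b - a).
have w0 : 0 <= w by rewrite divr_ge0 // subr_ge0 // ltW.
have w1 : w <= 1 by rewrite ler_pdivrMr ?subr_gt0 // mul1r lerD2l lerN2.
have tE : t = w * a + (1 - w) * b by rewrite /w; field.
have b0 : 0 <= b by lra.
rewrite {1}tE. apply: le_trans (@powR_conv q w a b q1 w0 w1 a0 b0) _.
by rewrite le_eqVlt; apply/orP; left; apply/eqP; rewrite /w; field.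
Qed.

Lemma chord_ge {q a t b : R} : 0 < q -> q <= 1 -> 0 <= a -> a <= t -> t <= b -> a < b ->
  a `^ q + (b `^ q - a `^ q) / (b - a) * (t - a) <= t `^ q.
Proof.
move=> q0 q1 a0 hat tb ab.
have ba : b - a != 0 by rewrite subr_eq0 gt_eqF.
pose w := (b - t) / (b - a).
have w0 : 0 <= w by rewrite divr_ge0 // subr_ge0 // ltW.
have w1 : w <= 1 by rewrite ler_pdivrMr ?subr_gt0 // mul1r lerD2l lerN2.
have tE : t = w * a + (1 - w) * b by rewrite /w; field.
have Q1 : 1 <= q^-1 by rewrite invf_ge1.
have -> : a `^ q + (b `^ q - a `^ q) / (b - a) * (t - a) = w * a `^ q + (1 - w) * b `^ q
  by rewrite /w; field.
have ys0 : 0 <= w * a `^ q + (1 - w) * b `^ q.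
  by rewrite addr_ge0 // mulr_ge0 ?powR_ge0 // subr_ge0.
have := @powR_conv _ _ _ _ Q1 w0 w1 (powR_ge0 a q) (powR_ge0 b q).
rewrite -!powRrM !mulfV ?gt_eqF // !powRr1 //; last by lra.
rewrite -tE => h.
have := ge0_ler_powR (ltW q0) _ _ h.
rewrite -powRrM mulVf ?gt_eqF // powRr1 //; apply; rewrite nnegrE ?powR_ge0 //.
lra.
Qed.


Lemma one_nz (I : finType) (P : pred I) (g : I -> R) :
  (#|[pred j | P j & g j != 0%R]| <= 1)%N ->
  (forall j, P j -> g j = 0) \/ (exists j1, P j1 /\ forall j, P j -> j != j1 -> g j = 0).
Proof.
move=> /card_le1_eqP h.
case: (pickP [pred j | P j & g j != 0]) => [j1 /andP[Pj1 gj1] | H0]; last first.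
  by left=> j Pj; have := H0 j => /=; rewrite Pj /= => /negbFE/eqP.
right; exists j1; split => // j Pj jn.
apply/eqP; apply: contraNT jn => gj.
by apply/eqP; apply: h; rewrite inE /= ?Pj ?gj ?Pj1 ?gj1.
Qed.

Lemma sum_one (I : finType) (P : pred I) (g : I -> R) (f : R -> R) :
  (#|[pred j | P j & g j != 0%R]| <= 1)%N -> f 0 = 0 ->
  \sum_(j | P j) f (g j) = f (\sum_(j | P j) g j).
Proof.
move=> /(@one_nz _ _ _) [h|[j1 [Pj1 h]]] f0.
  have -> : \sum_(j | P j) g j = 0 by apply: big1.
  by rewrite f0; apply: big1 => j Pj; rewrite h.
have -> : \sum_(j | P j) g j = g j1.
  rewrite (bigD1 j1 Pj1) /= big1 ?addr0 // => j /andP[Pj jn]; exact: h.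
rewrite (bigD1 j1 Pj1) /= big1 ?addr0 // => j /andP[Pj jn]; by rewrite h.
Qed.

Lemma exc_le (n : nat) (lam : 'I_n -> R) m1 m2 :
  (forall i, 0 <= lam i) -> (forall i, lam i <= m1) ->
  \sum_i lam i = m1 + m2 -> 0 <= m2 -> m2 <= m1 ->
  \sum_i Num.max 0 (lam i - m2) <= m1 - m2.
Proof.
move=> l0 l1 lS m20 m21.
pose g i := Num.max 0 (lam i - m2).
have g0 i : 0 <= g i by rewrite /g le_max lexx.
have gm i : g i <= m1 - m2 by rewrite /g ge_max subr_ge0 m21 lerD2r l1.
case: (leqP #|[pred j | predT j & g j != 0%R]| 1) => hc.
  change (\sum_(i | predT i) id (g i) <= m1 - m2).
  have e := @sum_one 'I_n predT g id. rewrite e /=; last by []; last exact: hc.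
  have [h|[j1 [_ h]]] := @one_nz _ _ _ hc.
    by rewrite big1 ?subr_ge0 // => j _; rewrite h.
  by rewrite (bigD1 j1) //= big1 ?addr0 // => j jn; rewrite h.
have -> : \sum_i Num.max 0 (lam i - m2) = \sum_i (if g i != 0 then lam i - m2 else 0).
  apply: eq_bigr => i _; rewrite -/(g i); case: eqP => [->//|/eqP gn].
  by move: gn; rewrite /g; case: (leP 0 (lam i - m2)) => //; rewrite eqxx.
rewrite -big_mkcond /= sumrB sumr_const.
have h1 : \sum_(i | g i != 0) lam i <= m1 + m2.
  rewrite -lS [X in _ <= X](bigID (fun i => g i != 0)) /= lerDl sumr_ge0 //.
have -> : #|[pred j | predT j & g j != 0%R]| = #|[pred i | g i != 0]| by apply: eq_card.
move: hc h1.
set c := #|[pred i | g i != 0]|; set s := \sum_(i | g i != 0) lam i.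
move=> hc h1.
have h2 : 2%:R * m2 <= c%:R * m2 by rewrite ler_wpM2r // ler_nat.
rewrite -mulr_natl.
move: h1 h2; generalize (c%:R : R) => cc; generalize s => ss. 
move=> *; lra.
Qed.

Lemma lam_le (n : nat) (lam : 'I_n -> R) m1 m2 q : 1 <= q ->
  (forall i, 0 <= lam i) -> (forall i, lam i <= m1) ->
  \sum_i lam i = m1 + m2 -> 0 <= m2 -> m2 <= m1 ->
  \sum_i lam i `^ q <= m1 `^ q + m2 `^ q.
Proof.
move=> q1 l0 l1 lS m20 m21.
have q0 : q != 0 by rewrite gt_eqF // (lt_le_trans _ q1).
have [m2z|m2n] := eqVneq m2 0.
  subst m2; rewrite powR0 // addr0; rewrite addr0 in lS.
  have [m1z|m1n] := eqVneq m1 0.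
    rewrite m1z powR0 // big1 // => i _.
    have -> : lam i = 0 by apply/le_anti; rewrite l0 andbT -m1z l1.
    exact: powR0.
  have m1p : 0 < m1 by rewrite lt_neqAle eq_sym m1n -lS sumr_ge0.
  apply: (le_trans (ler_sum _ (fun i _ => pt_le q1 (l0 i) (l1 i) m1p))).
  by rewrite -mulr_suml -mulr_suml lS mulfV ?mul1r.
have m2p : 0 < m2 by rewrite lt_neqAle eq_sym m2n.
have m1p : 0 < m1 by apply: lt_le_trans m21.
have [m12|m12] := eqVneq m1 m2.
  subst m1.
  apply: (le_trans (ler_sum _ (fun i _ => pt_le q1 (l0 i) (l1 i) m2p))).
  rewrite -mulr_suml -mulr_suml lS le_eqVlt; apply/orP; left; apply/eqP; field.
  by rewrite m2n.
have m12p : m2 < m1 by rewrite lt_neqAle m21 eq_sym m12.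
pose s1 := m2 `^ q / m2.
pose c := (m1 `^ q - m2 `^ q) / (m1 - m2).
have cs : s1 <= c.
  have h := pt_le q1 m20 m21 m1p.
  rewrite mulrAC ler_pdivlMr // in h.
  rewrite /s1 /c ler_pdivlMr ?subr_gt0 // mulrAC ler_pdivrMr //.
  by rewrite mulrBr mulrBl lerD2r [X in _ <= X]mulrC.
have pt i : lam i `^ q <= s1 * lam i + (c - s1) * Num.max 0 (lam i - m2).
  case: (leP (lam i) m2) => hl.
    rewrite (_ : Num.max 0 (lam i - m2) = 0); last by apply/max_idPl; rewrite subr_le0.
    have -> : s1 * lam i = lam i / m2 * m2 `^ q by rewrite /s1; field.
    by rewrite mulr0 addr0; exact: pt_le q1 (l0 i) hl m2p.
  rewrite (_ : Num.max 0 (lam i - m2) = lam i - m2); last first.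
    by apply/max_idPr; rewrite subr_ge0 ltW.
  have -> : s1 * lam i + (c - s1) * (lam i - m2) = m2 `^ q + c * (lam i - m2).
    by rewrite /s1; field; rewrite m2n.
  exact: chord_le q1 m20 (ltW hl) (l1 i) m12p.
apply: (@le_trans _ _ (\sum_i (s1 * lam i + (c - s1) * Num.max 0 (lam i - m2)))).
  by apply: ler_sum => i _; exact: pt i.
rewrite big_split /= -mulr_sumr -mulr_sumr lS.
have E := @exc_le n lam m1 m2 l0 l1 lS m20 m21.
apply: (le_trans (lerD (lexx _) (ler_wpM2l _ E))); first by rewrite subr_ge0.
rewrite le_eqVlt; apply/orP; left; apply/eqP; rewrite /s1 /c; field.
by rewrite m2n /= subr_eq0 m12.
Qed.

Lemma lam_ge (n : nat) (lam : 'I_n -> R) m1 m2 q : 0 < q -> q <= 1 ->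
  (forall i, 0 <= lam i) -> (forall i, lam i <= m1) ->
  \sum_i lam i = m1 + m2 -> 0 <= m2 -> m2 <= m1 ->
  m1 `^ q + m2 `^ q <= \sum_i lam i `^ q.
Proof.
move=> qp q1 l0 l1 lS m20 m21.
have q0 : q != 0 by rewrite gt_eqF.
have [m2z|m2n] := eqVneq m2 0.
  subst m2; rewrite powR0 // addr0; rewrite addr0 in lS.
  have [m1z|m1n] := eqVneq m1 0.
    rewrite m1z powR0 // big1 // => i _.
    have -> : lam i = 0 by apply/le_anti; rewrite l0 andbT -m1z l1.
    exact: powR0.
  have m1p : 0 < m1 by rewrite lt_neqAle eq_sym m1n -lS sumr_ge0.
  apply: (le_trans _ (ler_sum _ (fun i _ => pt_ge qp q1 (l0 i) (l1 i) m1p))).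
  by rewrite -mulr_suml -mulr_suml lS mulfV ?mul1r.
have m2p : 0 < m2 by rewrite lt_neqAle eq_sym m2n.
have m1p : 0 < m1 by apply: lt_le_trans m21.
have [m12|m12] := eqVneq m1 m2.
  subst m1.
  apply: (le_trans _ (ler_sum _ (fun i _ => pt_ge qp q1 (l0 i) (l1 i) m2p))).
  rewrite -mulr_suml -mulr_suml lS le_eqVlt; apply/orP; left; apply/eqP; field.
  by rewrite m2n.
have m12p : m2 < m1 by rewrite lt_neqAle m21 eq_sym m12.
pose s1 := m2 `^ q / m2.
pose c := (m1 `^ q - m2 `^ q) / (m1 - m2).
have cs : c <= s1.
  have h := pt_ge qp q1 m20 m21 m1p.
  rewrite mulrAC ler_pdivrMr // in h.
  rewrite /s1 /c ler_pdivrMr ?subr_gt0 // mulrAC ler_pdivlMr //.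
  by rewrite mulrBr mulrBl lerD2r [X in X <= _]mulrC.
have pt i : s1 * lam i + (c - s1) * Num.max 0 (lam i - m2) <= lam i `^ q.
  case: (leP (lam i) m2) => hl.
    rewrite (_ : Num.max 0 (lam i - m2) = 0); last by apply/max_idPl; rewrite subr_le0.
    have -> : s1 * lam i = lam i / m2 * m2 `^ q by rewrite /s1; field.
    by rewrite mulr0 addr0; exact: pt_ge qp q1 (l0 i) hl m2p.
  rewrite (_ : Num.max 0 (lam i - m2) = lam i - m2); last first.
    by apply/max_idPr; rewrite subr_ge0 ltW.
  have -> : s1 * lam i + (c - s1) * (lam i - m2) = m2 `^ q + c * (lam i - m2).
    by rewrite /s1; field; rewrite m2n.
  exact: chord_ge qp q1 m20 (ltW hl) (l1 i) m12p.
apply: (@le_trans _ _ (\sum_i (s1 * lam i + (c - s1) * Num.max 0 (lam i - m2)))); last first.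
  by apply: ler_sum => i _; exact: pt i.
rewrite big_split /= -mulr_sumr -mulr_sumr lS.
have E := @exc_le n lam m1 m2 l0 l1 lS m20 m21.
apply: (le_trans _ (lerD (lexx _) (ler_wnM2l _ E))); last by rewrite subr_le0.
rewrite le_eqVlt; apply/orP; left; apply/eqP; rewrite /s1 /c; field.
by rewrite m2n /= subr_eq0 m12.
Qed.

Lemma scalar_main (n N : nat) (lam : 'I_n -> R) (nu : 'I_N -> R) q :
  (forall i, 0 <= lam i) -> (forall j, 0 <= nu j) -> \sum_i lam i = \sum_j nu j ->
  (forall i, exists j0, lam i <= nu j0 /\ forall j, nu j <= nu j0) ->
  (#|[pred j | nu j != 0%R]| <= 2)%N ->
  (1 <= q -> \sum_i lam i `^ q <= \sum_j nu j `^ q) /\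
  (0 < q -> q <= 1 -> \sum_j nu j `^ q <= \sum_i lam i `^ q).
Proof.
move=> l0 n0 hS hmax hc.
case: (pickP (fun i : 'I_n => true)) => [i0 _ | none]; last first.
  have lz : \sum_i lam i `^ q = 0 by rewrite big_pred0.
  have nz j : nu j = 0.
    have : \sum_j nu j = 0 by rewrite -hS big_pred0.
    by move/eqP; rewrite psumr_eq0 // => /allP/(_ j (mem_index_enum _))/implyP/(_ isT)/eqP.
  have nqz q' : q' != 0 -> \sum_j nu j `^ q' = 0.
    by move=> q'0; rewrite big1 // => j _; rewrite nz powR0.
  split.
    by move=> q1; rewrite lz nqz // gt_eqF // (lt_le_trans _ q1).
  by move=> q0 q1; rewrite lz nqz // gt_eqF.
have [j0 [_ j0max]] := hmax i0.
set m1 := nu j0.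
set m2 := \sum_(j | j != j0) nu j.
have hS2 : \sum_i lam i = m1 + m2 by rewrite hS (bigD1 j0).
have hc1 : (#|[pred j | (j != j0) & nu j != 0%R]| <= 1)%N.
  have [m1z|m1n] := eqVneq m1 0.
    rewrite eq_card0 // => j; rewrite !inE.
    have -> : nu j = 0 by apply/le_anti; rewrite n0 andbT -m1z j0max.
    by rewrite eqxx andbF.
  move: hc; rewrite (cardD1 j0) inE m1n /= add1n ltnS.
  by move/(leq_trans _); apply; rewrite leq_eqVlt; apply/orP; left; apply/eqP; apply: eq_card.
have m20 : 0 <= m2 by rewrite sumr_ge0.
have m21 : m2 <= m1.
  have [h|[j1 [Pj1 h]]] := @one_nz _ _ _ hc1.
    by rewrite /m2 big1 // n0.
  by rewrite /m2 (bigD1 j1) //= big1 ?addr0 ?j0max // => j /andP[? ?]; apply: h.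
have l1 i : lam i <= m1.
  have [j [lj jm]] := hmax i; exact: le_trans lj (j0max j).
have nS q' : q' != 0 -> \sum_j nu j `^ q' = m1 `^ q' + m2 `^ q'.
  move=> q'0; rewrite (bigD1 j0) //=; congr (_ + _).
  by rewrite (@sum_one _ (fun j => j != j0) nu (fun x => x `^ q')) // powR0.
split.
  move=> q1; rewrite nS ?gt_eqF ?(lt_le_trans _ q1) //.
  exact: lam_le q1 l0 l1 hS2 m20 m21.
move=> q0 q1; rewrite nS ?gt_eqF //.
exact: lam_ge q0 q1 l0 l1 hS2 m20 m21.
Qed.

End Scalar.

Section Gen.
Variable F : fieldType.

Lemma char_poly_sim n (Q P D : 'M[F]_n) : Q *m P = 1%:M ->
  char_poly (Q *m D *m P) = char_poly D.
Proof.
move=> QP.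
rewrite /char_poly.
set Q' := map_mx polyC Q; set P' := map_mx polyC P.
have QP' : Q' *m P' = 1%:M by rewrite -map_mxM QP map_mx1.
have -> : char_poly_mx (Q *m D *m P) = Q' *m char_poly_mx D *m P'.
  rewrite /char_poly_mx !map_mxM mulmxBr mulmxBl -/Q' -/P'.
  by congr (_ - _); rewrite mul_mx_scalar -scalemxAl QP' scalemx1.
rewrite !det_mulmx mulrC mulrA -det_mulmx.
by rewrite (mulmx1C QP') det1 mul1r.
Qed.

Lemma rank_diag_ge n (d : 'rV[F]_n) :
  (#|[pred i | d ord0 i != 0%R]| <= \rank (diag_mx d))%N.
Proof.
set A := [pred i | d ord0 i != 0%R].
pose f := fun a : 'I_#|A| => (enum_val a).
have fA a : d 0 (f a) != 0 by have := enum_valP a.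
pose M : 'M[F]_(#|A|, n) := \matrix_(a, j) (if j == f a then (d 0 j)^-1 else 0).
pose N : 'M[F]_(n, #|A|) := \matrix_(j, a) (j == f a)%:R.
apply: (@mulmx1_min_rank _ _ _ _ _ M N).
apply/matrixP => a b; rewrite mul_mx_diag !mxE.
rewrite (bigD1 (f b)) //= big1 => [|j jn]; last first.
  by rewrite !mxE (negbTE jn) mulr0.
rewrite !mxE eqxx mulr1 addr0.
case: (eqVneq (f b) (f a)) => [e|ne].
  have -> : a = b by apply: enum_val_inj.
  by rewrite eqxx mulVf //.
rewrite mul0r.
have -> : (a == b) = false.
  by apply/negbTE; apply: contraNneq ne => ->.
by [].
Qed.

End Gen.

Section An.
Variable R : realType.
Local Notation C := R[i].

Definition n2 (z : C) : R := complex.Re z ^+ 2 + complex.Im z ^+ 2.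
Definition fr m n (X : 'M[C]_(m, n)) : R := \sum_i \sum_j n2 (X i j).

Lemma n2_ge0 z : 0 <= n2 z.
Proof. by rewrite /n2 addr_ge0 // sqr_ge0. Qed.

Lemma fr_ge0 m n (X : 'M[C]_(m, n)) : 0 <= fr X.
Proof. by rewrite /fr sumr_ge0 // => i _; rewrite sumr_ge0 // => j _; exact: n2_ge0. Qed.

Lemma CS (I : finType) (a b : I -> R) :
  (\sum_i a i * b i) ^+ 2 <= (\sum_i a i ^+ 2) * (\sum_i b i ^+ 2).
Proof.
have key : 0 <= \sum_i \sum_j (a i * b j - a j * b i) ^+ 2.
  by rewrite sumr_ge0 // => i _; rewrite sumr_ge0 // => j _; rewrite sqr_ge0.
have E : \sum_i \sum_j (a i * b j - a j * b i) ^+ 2 =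
   \sum_i \sum_j (a i ^+ 2 * b j ^+ 2) + \sum_i \sum_j (a j ^+ 2 * b i ^+ 2)
   - 2 * \sum_i \sum_j ((a i * b i) * (a j * b j)).
  rewrite mulr_sumr -big_split -sumrB /=; apply: eq_bigr => i _.
  rewrite mulr_sumr -big_split -sumrB /=; apply: eq_bigr => j _; ring.
have E1 : \sum_i \sum_j (a i ^+ 2 * b j ^+ 2) = (\sum_i a i ^+ 2) * (\sum_i b i ^+ 2).
  by rewrite mulr_suml; apply: eq_bigr => i _; rewrite mulr_sumr.
have E2 : \sum_i \sum_j (a j ^+ 2 * b i ^+ 2) = (\sum_i a i ^+ 2) * (\sum_i b i ^+ 2).
  by rewrite exchange_big /= -E1.
have E3 : \sum_i \sum_j ((a i * b i) * (a j * b j)) = (\sum_i a i * b i) ^+ 2.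
  by rewrite expr2 mulr_suml; apply: eq_bigr => i _; rewrite mulr_sumr.
move: key; rewrite E E1 E2 E3.
set X := (\sum_i a i ^+ 2) * (\sum_i b i ^+ 2); set Y := (\sum_i a i * b i) ^+ 2.
move=> h; lra.
Qed.

Lemma CS2 (I : finType) (a b : I -> R) :
  \sum_i a i * b i <= Num.sqrt (\sum_i a i ^+ 2) * Num.sqrt (\sum_i b i ^+ 2).
Proof.
rewrite -sqrtrM ?sumr_ge0 // => [|i _]; last exact: sqr_ge0.
apply: le_trans (ler_norm _) _.
by rewrite -sqrtr_sqr ler_sqrt ?CS // mulr_ge0 // sumr_ge0 // => i _; rewrite sqr_ge0.
Qed.


Definition nm (z : C) : R := Num.sqrt (n2 z).

Lemma nm_ge0 z : 0 <= nm z. Proof. exact: sqrtr_ge0. Qed.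
Lemma nm2 z : nm z ^+ 2 = n2 z. Proof. by rewrite sqr_sqrtr // n2_ge0. Qed.
Lemma normcE z : `|z| = (nm z)%:C. Proof. by rewrite normc_def. Qed.

Lemma nmD x y : nm (x + y) <= nm x + nm y.
Proof. by have := ler_normD x y; rewrite !normcE -(rmorphD (real_complex R)) lecR. Qed.

Lemma nmM x y : nm (x * y) = nm x * nm y.
Proof. by apply: complexI; rewrite (rmorphM (real_complex R)) -[(nm (x * y))%:C]normcE normrM !normcE. Qed.

Lemma nm_sum (I : finType) (x : I -> C) : nm (\sum_i x i) <= \sum_i nm (x i).
Proof.
have := ler_norm_sum (index_enum I) x predT.
have e : \sum_(i <- index_enum I | predT i) `|x i| = (\sum_i nm (x i))%:C.
  by rewrite (rmorph_sum (real_complex R)); apply: eq_bigr => i _; exact: normcE.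
by rewrite e normcE lecR.
Qed.

Lemma sq_le (a b : R) : 0 <= a -> a <= b -> a ^+ 2 <= b ^+ 2.
Proof. by move=> a0 ab; rewrite ler_pXn2r // nnegrE (le_trans a0 ab). Qed.

Lemma fr_cV m (u : 'cV[C]_m) : fr u = \sum_i n2 (u i 0).
Proof. by rewrite /fr; apply: eq_bigr => i _; rewrite big_ord1. Qed.

Lemma fr_mul m n (A : 'M[C]_(m, n)) (z : 'cV[C]_n) : fr (A *m z) <= fr A * fr z.
Proof.
rewrite fr_cV [fr z]fr_cV /fr mulr_suml; apply: ler_sum => i _; rewrite mxE.
apply: (le_trans (y := (\sum_k nm (A i k) * nm (z k 0)) ^+ 2)).
  rewrite -nm2; apply: sq_le; first exact: nm_ge0.
  by under [X in _ <= X]eq_bigr do rewrite -nmM; exact: nm_sum.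
apply: le_trans (CS _ _) _.
by under eq_bigr do rewrite nm2; under [X in _ * X]eq_bigr do rewrite nm2.
Qed.

Definition vn m (u : 'cV[C]_m) : R := Num.sqrt (fr u).

Lemma vn_ge0 m (u : 'cV[C]_m) : 0 <= vn u. Proof. exact: sqrtr_ge0. Qed.
Lemma vn2 m (u : 'cV[C]_m) : vn u ^+ 2 = fr u. Proof. by rewrite sqr_sqrtr // fr_ge0. Qed.

Lemma vnD m (u v : 'cV[C]_m) : vn (u + v) <= vn u + vn v.
Proof.
have h : fr (u + v) <= (vn u + vn v) ^+ 2.
  rewrite fr_cV.
  apply: (le_trans (y := \sum_i (nm (u i 0) + nm (v i 0)) ^+ 2)).
    apply: ler_sum => i _; rewrite mxE -nm2; apply: sq_le; [exact: nm_ge0 | exact: nmD].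
  have e : \sum_i (nm (u i 0) + nm (v i 0)) ^+ 2 =
     fr u + fr v + 2 * \sum_i nm (u i 0) * nm (v i 0).
    rewrite !fr_cV mulr_sumr -!big_split /=; apply: eq_bigr => i _.
    by rewrite -!nm2; ring.
  rewrite e.
  have cs := CS2 (fun i => nm (u i 0)) (fun i => nm (v i 0)).
  have e1 : \sum_i nm (u i 0) ^+ 2 = fr u by rewrite fr_cV; under eq_bigr do rewrite nm2.
  have e2 : \sum_i nm (v i 0) ^+ 2 = fr v by rewrite fr_cV; under eq_bigr do rewrite nm2.
  rewrite /= e1 e2 -/(vn u) -/(vn v) in cs.
  rewrite sqrrD !vn2; lra.
rewrite /vn -(ger0_norm (addr_ge0 (vn_ge0 u) (vn_ge0 v))) -sqrtr_sqr.
by rewrite ler_sqrt // sqr_ge0.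
Qed.

Lemma vn0 m : vn (0 : 'cV[C]_m) = 0.
Proof.
rewrite /vn fr_cV big1 ?sqrtr0 // => i _; rewrite mxE /n2 /=; rewrite expr2 mulr0 addr0 //.
Qed.

Lemma vn_sum m (I : finType) (y : I -> 'cV[C]_m) : vn (\sum_k y k) <= \sum_k vn (y k).
Proof.
apply: (big_ind2 (fun x r => vn x <= r)).
- by rewrite vn0.
- move=> x1 r1 x2 r2 h1 h2; apply: le_trans (vnD _ _) _; exact: lerD.
- by move=> i _.
Qed.

Lemma fr_sum m (I : finType) (y : I -> 'cV[C]_m) : fr (\sum_k y k) <= (\sum_k vn (y k)) ^+ 2.
Proof.
rewrite -vn2; apply: sq_le; [exact: vn_ge0 | exact: vn_sum].
Qed.

Lemma conjc_mul z : conjc z * z = (n2 z)%:C.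
Proof.
case: z => a b; rewrite /n2 /=.
apply/eqP; rewrite eq_complex /=; apply/andP; split; apply/eqP; ring.
Qed.

Lemma adjmxE m n (X : 'M[C]_(m, n)) i j : adjmx X i j = conjc (X j i).
Proof. by rewrite /adjmx !mxE. Qed.

Lemma adjmxK m n (X : 'M[C]_(m, n)) : adjmx (adjmx X) = X.
Proof. by apply/matrixP => i j; rewrite !adjmxE conjcK. Qed.

Lemma adjmx_mul m n p (X : 'M[C]_(m, n)) (Y : 'M[C]_(n, p)) :
  adjmx (X *m Y) = adjmx Y *m adjmx X.
Proof.
apply/matrixP => i j; rewrite adjmxE mxE [RHS]mxE rmorph_sum /=.
by apply: eq_bigr => k _; rewrite !adjmxE rmorphM /= mulrC.
Qed.

Lemma adjmx_diag m n (X : 'M[C]_(m, n)) j :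
  (adjmx X *m X) j j = (\sum_i n2 (X i j))%:C.
Proof.
rewrite mxE; rewrite (big_morph (real_complex R) (fun x y => rmorphD _ x y) (rmorph0 _)).
by apply: eq_bigr => i _; rewrite adjmxE conjc_mul.
Qed.

Lemma tr_adj m n (X : 'M[C]_(m, n)) : \tr (adjmx X *m X) = (fr X)%:C.
Proof.
rewrite /mxtrace /fr exchange_big /=.
rewrite (big_morph (real_complex R) (fun x y => rmorphD _ x y) (rmorph0 _)).
by apply: eq_bigr => j _; rewrite adjmx_diag.
Qed.

Lemma fr_tr m n (X : 'M[C]_(m, n)) : fr X = complex.Re (\tr (adjmx X *m X)).
Proof. by rewrite tr_adj. Qed.


Lemma adjmx_tc m n (M : 'M[C]_(m, n)) : adjmx M = (M ^t*)%sesqui.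
Proof. by apply/matrixP => i j; rewrite !mxE. Qed.

Lemma spec_decomp m n (X : 'M[C]_(m, n)) : exists d : 'I_n -> R,
  [/\ perm_eq (eigenvalues (adjmx X *m X)) [seq (d i)%:C | i <- enum 'I_n],
      (forall i, 0 <= d i),
      \sum_i d i = fr X,
      (forall i, exists w : 'cV[C]_n, fr w = 1 /\ d i = fr (X *m w))
    & (forall (M : R) (v : 'cV[C]_n), (forall i, d i <= M) -> fr (X *m v) <= M * fr v)
      /\ (#|[pred i | d i != 0%R]| <= \rank X)%N ].
Proof.
set H := adjmx X *m X.
have Hadj : adjmx H = H by rewrite /H adjmx_mul adjmxK.
have Hn : H \is normalmx.
  apply/normalmxP; rewrite -adjmx_tc Hadj //.
have /orthomx_spectralP HE := Hn.
set P := spectralmx H in HE; set dd := spectral_diag H in HE.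
have PU : P \is unitarymx := spectral_unitarymx H.
have PPt : P *m adjmx P = 1%:M by rewrite adjmx_tc; apply/unitarymxP.
have Pinv : invmx P = adjmx P by rewrite adjmx_tc; exact: invmx_unitary PU.
have PtP : adjmx P *m P = 1%:M by rewrite -Pinv mulVmx // spectral_unit.
set Y := X *m adjmx P.
have DE : diag_mx dd = adjmx Y *m Y.
  rewrite /Y adjmx_mul adjmxK -mulmxA (mulmxA (adjmx X)) -/H HE Pinv.
  by rewrite !mulmxA PPt mul1mx -mulmxA PPt mulmx1.
pose d i := \sum_k n2 (Y k i).
have ddE i : dd 0 i = (d i)%:C.
  by have /matrixP/(_ i i) := DE; rewrite adjmx_diag mxE eqxx mulr1n.
exists d; split.
- rewrite /eigenvalues; case: closed_field_poly_normal => s /= hs.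
  apply: prod_XsubC_eq.
  have : char_poly H = char_poly (diag_mx dd).
    by rewrite [in LHS]HE Pinv char_poly_sim.
  rewrite [char_poly (diag_mx _)]char_poly_trig ?diag_mx_is_trig //.
  have hs' : char_poly H = \prod_(z <- s) ('X - z%:P).
    by rewrite [LHS]hs (monicP (char_poly_monic _)) scale1r.
  rewrite hs' => ->.
  rewrite big_map big_enum /=; apply: eq_bigr => i _.
  by rewrite mxE eqxx mulr1n ddE.
- by move=> i; rewrite sumr_ge0 // => k _; exact: n2_ge0.
- have -> : \sum_i d i = fr Y by rewrite /fr exchange_big.
  apply: complexI; rewrite -!tr_adj /Y adjmx_mul adjmxK.
  by rewrite !mulmxA mxtrace_mulC !mulmxA PtP mul1mx.
- move=> i; exists (col i (adjmx P)); split.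
    have := adjmx_diag (adjmx P) i; rewrite adjmxK PPt mxE eqxx mulr1n => e.
    apply: complexI; rewrite (_ : (1 : R)%:C = 1) // e; congr (_%:C).
    by apply: eq_bigr => k _; rewrite big_ord1 mxE.
  rewrite colE mulmxA -colE /fr; apply: eq_bigr => k _.
  by rewrite big_ord1 [col _ _ _ _]mxE.
split.
- move=> M v hM.
  set u := P *m v.
  have fru : fr u = \sum_k n2 (u k 0) by rewrite /fr; apply: eq_bigr => k _; rewrite big_ord1.
  have fuv : fr u = fr v.
    apply: complexI; rewrite -!tr_adj /u adjmx_mul.
    by rewrite -!mulmxA (mulmxA (adjmx P)) PtP mul1mx.
  have fxv : fr (X *m v) = \sum_k d k * n2 (u k 0).
    apply: complexI; rewrite -tr_adj adjmx_mul.
    have -> : adjmx v *m adjmx X *m (X *m v) = adjmx u *m diag_mx dd *m u.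
      rewrite /u adjmx_mul -!mulmxA (mulmxA (adjmx X)) -/H HE Pinv.
      by rewrite !mulmxA.
    rewrite /mxtrace big_ord1 mul_mx_diag !mxE.
    rewrite (big_morph (real_complex R) (fun x y => rmorphD _ x y) (rmorph0 _)).
    apply: eq_bigr => k _; rewrite !mxE ddE.
    by rewrite mulrAC conjc_mul -rmorphM mulrC.
  rewrite fxv -fuv fru mulr_sumr; apply: ler_sum => k _.
  by rewrite ler_wpM2r // n2_ge0.
- have -> : #|[pred i | d i != 0%R]| = #|[pred i | dd ord0 i != 0%R]|.
    by apply: eq_card => i; rewrite !inE ddE fmorph_eq0.
  apply: (leq_trans (rank_diag_ge dd)); rewrite DE.
  apply: (leq_trans (mxrankM_maxr _ _)); exact: mxrankM_maxl.
Qed.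


Lemma fr_adj m n (X : 'M[C]_(m, n)) : fr (adjmx X) = fr X.
Proof.
rewrite /fr exchange_big /=; apply: eq_bigr => i _; apply: eq_bigr => j _.
by rewrite adjmxE; case: (X i j) => a b; rewrite /n2 /= sqrrN.
Qed.

Lemma adjmx_mxrow m N (n : 'I_N -> nat) (A : forall k, 'M[C]_(m, n k)) :
  adjmx (\mxrow_k A k) = \mxcol_k adjmx (A k).
Proof. by apply/matrixP => i j; rewrite !mxE. Qed.

Lemma adjmx_mxcol m N (n : 'I_N -> nat) (A : forall k, 'M[C]_(n k, m)) :
  adjmx (\mxcol_k A k) = \mxrow_k adjmx (A k).
Proof. by apply/matrixP => i j; rewrite !mxE. Qed.

Lemma fr_mxcol m N (n : 'I_N -> nat) (Z : forall k, 'M[C]_(n k, m)) :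
  fr (\mxcol_k Z k) = \sum_k fr (Z k).
Proof.
apply: complexI; rewrite -tr_adj adjmx_mxcol mul_mxrow_mxcol.
rewrite (rmorph_sum (real_complex R)) raddf_sum /=.
by apply: eq_bigr => k _; rewrite tr_adj.
Qed.

Lemma fr_mxrow m N (n : 'I_N -> nat) (A : forall k, 'M[C]_(m, n k)) :
  fr (\mxrow_k A k) = \sum_k fr (A k).
Proof.
rewrite -fr_adj adjmx_mxrow fr_mxcol; apply: eq_bigr => k _; exact: fr_adj.
Qed.

Lemma adjmx_col_mx m1 m2 n (U : 'M[C]_(m1, n)) (V : 'M[C]_(m2, n)) :
  adjmx (col_mx U V) = row_mx (adjmx U) (adjmx V).
Proof. by rewrite /adjmx map_col_mx tr_col_mx. Qed.

Lemma fr_col_mx m1 m2 n (U : 'M[C]_(m1, n)) (V : 'M[C]_(m2, n)) :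
  fr (col_mx U V) = fr U + fr V.
Proof.
apply: complexI; rewrite -tr_adj adjmx_col_mx mul_row_col mxtraceD.
by rewrite !tr_adj rmorphD.
Qed.

Lemma tap_eq m n (X : 'M[C]_(m, n)) (d : 'I_n -> R) r :
  perm_eq (eigenvalues (adjmx X *m X)) [seq (d i)%:C | i <- enum 'I_n] ->
  trace_abs_pow r X = \sum_i d i `^ (r / 2).
Proof.
move=> hp; rewrite /trace_abs_pow (perm_big _ hp) /= big_map big_enum /=.
by apply: eq_bigr.
Qed.

Lemma rank1_schatten m n (X : 'M[C]_(m, n)) p : \rank X = 1%N -> 0 < p ->
  schatten p X = Num.sqrt (fr X).
Proof.
move=> r1 p0.
have [d [hp d0 dS _ [_ dr]]] := spec_decomp X.
rewrite /schatten (tap_eq _ hp).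
have hc : (#|[pred i | predT i & d i != 0%R]| <= 1)%N.
  by move: dr; rewrite r1; apply: leq_trans; rewrite leq_eqVlt; apply/orP; left; apply/eqP; apply: eq_card.
have := @sum_one R _ predT d (fun x => x `^ (p / 2)) hc.
rewrite powR0 ?mulf_neq0 ?gt_eqF ?invr_gt0 // => /(_ erefl) /= ->.
rewrite dS -powRrM -powR12_sqrt ?fr_ge0 //; congr (_ `^ _).
by field; rewrite gt_eqF.
Qed.

Lemma n2_real (x : R) : n2 (x%:C) = x ^+ 2.
Proof. by rewrite /n2 /= (expr2 0) mul0r addr0. Qed.

Lemma vn_mul m n (X : 'M[C]_(m, n)) (z : 'cV[C]_n) : vn (X *m z) <= Num.sqrt (fr X) * vn z.
Proof.
rewrite /vn -sqrtrM ?fr_ge0 // ler_sqrt ?mulr_ge0 ?fr_ge0 //; exact: fr_mul.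
Qed.
End An.

Unset Implicit Arguments.
Set Strict Implicit.

Theorem mainTheorem3 (R : realType) (m1 m2 N : nat) (n : 'I_N -> nat)
  (A : forall k : 'I_N, 'M[R[i]]_(m1, n k)) (B : forall k : 'I_N, 'M[R[i]]_(m2, n k))
  (p : R) :
  (forall k, \rank (A k) = 1%N) -> (forall k, \rank (B k) = 1%N) ->
  0 < p ->
  (2 <= p -> schatten p (block2N A B) <= schatten p (norm_compression p A B)) /\
  (p <= 2 -> schatten p (norm_compression p A B) <= schatten p (block2N A B)).
Proof.
move=> rA rB p0.
set T := block2N A B; set Cm := norm_compression p A B.
pose a k := schatten p (A k); pose b k := schatten p (B k).
have aE k : a k = Num.sqrt (fr (A k)) := rank1_schatten (rA k) p0.
have bE k : b k = Num.sqrt (fr (B k)) := rank1_schatten (rB k) p0.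
have a0 k : 0 <= a k by rewrite aE sqrtr_ge0.
have b0 k : 0 <= b k by rewrite bE sqrtr_ge0.
have a2 k : a k ^+ 2 = fr (A k) by rewrite aE sqr_sqrtr ?fr_ge0.
have b2 k : b k ^+ 2 = fr (B k) by rewrite bE sqr_sqrtr ?fr_ge0.
have CmE0 k : Cm ord0 k = (a k)%:C by rewrite /Cm /norm_compression mxE.
have CmE1 k : Cm (lift ord0 ord0) k = (b k)%:C by rewrite /Cm /norm_compression mxE.
have [dT [hpT dT0 dTS dTw _]] := spec_decomp T.
have [dC [hpC dC0 dCS _ [dCb dCr]]] := spec_decomp Cm.
have frC : fr Cm = \sum_k (fr (A k) + fr (B k)).
  rewrite big_split /= [fr Cm]/fr big_ord_recl big_ord1.
  congr (_ + _); apply: eq_bigr => k _; rewrite /Cm /norm_compression mxE /=.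
    by rewrite -/(a k) -a2 -n2_real.
  by rewrite -/(b k) -b2 -n2_real.
have frT : fr T = \sum_k (fr (A k) + fr (B k)).
  by rewrite /T /block2N fr_col_mx !fr_mxrow big_split.
have hS : \sum_i dT i = \sum_j dC j by rewrite dTS dCS frT frC.
have hcard : (#|[pred j | dC j != 0%R]| <= 2)%N := leq_trans dCr (rank_leq_row Cm).
have hmax : forall i, exists j0, dT i <= dC j0 /\ forall j, dC j <= dC j0.
  move=> i.
  have N0 : (0 < N)%N.
    case: (posnP N) => // N0.
    have : \sum_(k < N) n k = 0%N by apply: big_pred0 => k; exfalso; case: k => k' hk; move: hk; rewrite N0.
    by move=> e; exfalso; case: i => i' hi; move: hi; rewrite e.
  have [j0 _ hj0] := @arg_maxP _ _ _ (Ordinal N0) predT dC isT.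
  exists j0; split; last by move=> j; exact: hj0.
  have [w [fw ->]] := dTw i.
  pose z k := submxcol w k.
  have wE : w = \mxcol_k z k by rewrite submxcolK.
  pose rho : 'cV[R[i]]_N := \col_k (vn (z k))%:C.
  have frho : fr rho = 1.
    rewrite fr_cV -fw wE fr_mxcol; apply: eq_bigr => k _.
    by rewrite mxE n2_real vn2.
  have hA : fr (\mxrow_k A k *m w) <= (\sum_k a k * vn (z k)) ^+ 2.
    rewrite wE mul_mxrow_mxcol; apply: le_trans (fr_sum _) _.
    apply: sq_le; first by rewrite sumr_ge0 // => k _; exact: vn_ge0.
    apply: ler_sum => k _; rewrite aE; exact: vn_mul.
  have hB : fr (\mxrow_k B k *m w) <= (\sum_k b k * vn (z k)) ^+ 2.
    rewrite wE mul_mxrow_mxcol; apply: le_trans (fr_sum _) _.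
    apply: sq_le; first by rewrite sumr_ge0 // => k _; exact: vn_ge0.
    apply: ler_sum => k _; rewrite bE; exact: vn_mul.
  have hCr : fr (Cm *m rho) = (\sum_k a k * vn (z k)) ^+ 2 + (\sum_k b k * vn (z k)) ^+ 2.
    rewrite fr_cV big_ord_recl big_ord1.
    have e2 i0 : (Cm *m rho) i0 0 = \sum_k Cm i0 k * rho k 0 by rewrite mxE.
    have e (c : 'I_N -> R) (Ci : 'I_N -> R[i]) : (forall k, Ci k = (c k)%:C) ->
        n2 (\sum_k Ci k * rho k 0) = (\sum_k c k * vn (z k)) ^+ 2.
      move=> hc; rewrite -n2_real (rmorph_sum (real_complex R)); congr (n2 _).
      by apply: eq_bigr => k _; rewrite hc mxE rmorphM.
    rewrite !e2; congr (_ + _); [exact: e CmE0 | exact: e CmE1].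
  have := dCb (dC j0) rho (fun j => hj0 j isT); rewrite frho mulr1 hCr => h.
  rewrite /T /block2N mul_col_mx fr_col_mx.
  exact: le_trans (lerD hA hB) h.
have [H1 H2] := @scalar_main R _ _ dT dC (p / 2) dT0 dC0 hS hmax hcard.
rewrite /schatten (tap_eq p hpT) (tap_eq p hpC).
have pi0 : 0 <= p^-1 by rewrite invr_ge0 ltW.
split => hp.
  apply: ge0_ler_powR => //.
  - by rewrite nnegrE sumr_ge0 // => i _; rewrite powR_ge0.
  - by rewrite nnegrE sumr_ge0 // => i _; rewrite powR_ge0.
  by apply: H1; lra.
apply: ge0_ler_powR => //.
- by rewrite nnegrE sumr_ge0 // => i _; rewrite powR_ge0.
- by rewrite nnegrE sumr_ge0 // => i _; rewrite powR_ge0.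
by apply: H2; lra.
Qed.
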